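(* In the private bug bounty model with a single artificial bug described in the context, let $c_a(\overline v)$ be the unique fixed point of $\hat c\mapsto\overline v\,\Phi(\hat c;1)$. Then $c_a(\overline v)$ increases in $\overline v$ and $C(\overline v)=[0,c_a(\overline v)]$, where $$C(\overline v)=\Big\{\hat c:\ \hat c=\Psi(\hat c;\boldsymbol v,v_a,q_a),\ \sum_l v^l+v_a\le\overline v,\ v^l\ge0,\ v_a\ge0,\ q_a\in[0,1]\Big\}.$$
   Context: Private bug bounty model. There are $L$ potential organic bugs; bug $l$ exists with probability $\mu^l\in(0,1]$ and has complexity $q^l\in(0,1]$. There are $n$ agents with private search costs drawn i.i.d. from a distribution $F$ with support $[\underline c,\overline c]$ ($-\infty\le\underline c<\overline c\le\infty$, $\overline c>0$), continuous with full support, finite density $f$ and $F/f$ non-decreasing; $F(\hat c)$ denotes the distribution function. The designer has budget $\overline v>0$, sets prizes $v^l\ge0$ for organic bugs, and inserts one artificial bug (existing with certainty) with prize $v_a\ge0$ and complexity $q_a\in[0,1]$. A searching agent finds each existing bug of complexity $q$ with probability $q$, independently across agents and bugs; the prize of a found bug goes to one of its finders chosen uniformly at random. $\Phi(\hat c;q)$ is the probability that a searching agent wins the prize of an existing bug of complexity $q$ when each of the other $n-1$ agents searches iff his/her cost is at most $\hat c$. $\Psi(\hat c;\boldsymbol v,v_a,q_a)=\sum_l v^l\mu^l\Phi(\hat c;q^l)+v_a\Phi(\hat c;q_a)$. *)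

(* Defs.v *)
From Stdlib Require Import Reals Lra Lia.
From Coquelicot Require Import Coquelicot.
Open Scope R_scope.

Fixpoint sumL (L : nat) (g : nat -> R) : R :=
  match L with
  | O => 0
  | S k => sumL k g + g k
  end.

(* Phi n F c q : probability that a searching agent wins the prize of an
   existing bug of complexity q when each of the other n-1 agents searches
   iff cost <= c (i.e. with probability F c).  Each other agent finds the bug
   with probability F c * q independently; given that our agent finds it
   (probability q) and k others find it, he wins with probability 1/(k+1). *)
Definition Phi (n : nat) (F : R -> R) (c q : R) : R :=
  let p := F c * q in
  sum_f_R0 (fun k => Binomial.C (n - 1) k * p ^ k * (1 - p) ^ (n - 1 - k)
                     * (q / INR (k + 1))) (n - 1).

Definition Psi (n : nat) (F : R -> R) (L : nat) (mu qb : nat -> R)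
    (v : nat -> R) (va qa : R) (c : R) : R :=
  sumL L (fun l => v l * mu l * Phi n F c (qb l)) + va * Phi n F c qa.

Definition Cset (n : nat) (F : R -> R) (L : nat) (mu qb : nat -> R)
    (vbar c : R) : Prop :=
  exists (v : nat -> R) (va qa : R),
    c = Psi n F L mu qb v va qa c /\
    sumL L v + va <= vbar /\
    (forall l, (l < L)%nat -> 0 <= v l) /\
    0 <= va /\ 0 <= qa <= 1.

Definition cost_distribution (F f : R -> R) (clo chi : Rbar) : Prop :=
  Rbar_lt clo chi /\ Rbar_lt (Finite 0) chi /\
  (forall x y, x <= y -> F x <= F y) /\
  is_lim F m_infty 0 /\ is_lim F p_infty 1 /\
  (forall x, continuous F x) /\
  (forall x, Rbar_le (Finite x) clo -> F x = 0) /\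
  (forall x, Rbar_le chi (Finite x) -> F x = 1) /\
  (forall x y, Rbar_le clo (Finite x) -> Rbar_le (Finite y) chi -> x < y -> F x < F y) /\
  (forall x, Rbar_lt clo (Finite x) -> Rbar_lt (Finite x) chi -> is_derive F x (f x)) /\
  (forall x y, Rbar_lt clo (Finite x) -> Rbar_lt (Finite y) chi -> x <= y ->
     F x / f x <= F y / f y).

(* Main.v *)
Require Import Defs.
From Stdlib Require Import Reals Lra Lia.
From Coquelicot Require Import Coquelicot.
Open Scope R_scope.

Lemma cont_pow (g : R -> R) x j : continuous g x -> continuous (fun y => (g y)^j) x.
Proof.
intros H; induction j; simpl.
- apply continuous_const.
- apply (continuous_mult g (fun y => g y ^ j)); auto.
Qed.

Definition Gs (m : nat) (x : R) := sum_f_R0 (fun j => (1 - x)^j) m.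

Lemma cont_Gs (g : R -> R) x m : continuous g x -> continuous (fun y => Gs m (g y)) x.
Proof.
intros H; unfold Gs; induction m; simpl.
- apply continuous_const.
- apply (continuous_plus (fun y => sum_f_R0 (fun j => (1 - g y)^j) m) (fun y => (1 - g y) * (1 - g y)^m)); auto.
  apply (cont_pow (fun y => 1 - g y) x (S m)).
  apply (continuous_plus (fun _ => 1) (fun y => - g y)). apply continuous_const.
  apply (continuous_opp g); auto.
Qed.

Lemma sum_only0 (f : nat -> R) N : (forall k, (0 < k)%nat -> f k = 0) -> sum_f_R0 f N = f 0%nat.
Proof. intros H; induction N; simpl; auto. rewrite IHN, (H (S N)); [ring|lia]. Qed.

Lemma Gs0 m : Gs m 0 = INR (S m).
Proof. unfold Gs; induction m; simpl sum_f_R0. simpl; reflexivity.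
rewrite IHm. replace (1-0) with 1 by ring. rewrite pow1. rewrite (S_INR (S m)). ring. Qed.

Lemma Gs_geom m x : x * Gs m x = 1 - (1 - x)^(S m).
Proof. unfold Gs; induction m; simpl sum_f_R0. simpl; ring.
rewrite Rmult_plus_distr_l, IHm. simpl; ring. Qed.

Lemma binom_term m k : (k <= m)%nat ->
  Binomial.C m k / INR (k + 1) = / INR (S m) * Binomial.C (S m) (S k).
Proof.
intros Hk. unfold Binomial.C. replace (S m - S k)%nat with (m - k)%nat by lia.
rewrite Nat.add_1_r. change (Factorial.fact (S m)) with (S m * Factorial.fact m)%nat.
change (Factorial.fact (S k)) with (S k * Factorial.fact k)%nat. rewrite !mult_INR.
assert (INR (Factorial.fact m) <> 0) by (apply not_0_INR, Factorial.fact_neq_0).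
assert (INR (Factorial.fact k) <> 0) by (apply not_0_INR, Factorial.fact_neq_0).
assert (INR (Factorial.fact (m-k)) <> 0) by (apply not_0_INR, Factorial.fact_neq_0).
assert (INR (S m) <> 0) by (apply not_0_INR; lia).
assert (INR (S k) <> 0) by (apply not_0_INR; lia).
field; auto.
Qed.

Lemma U_eq m x : sum_f_R0 (fun k => Binomial.C (S m) (S k) * x^k * (1-x)^(m-k)) m = Gs m x.
Proof.
destruct (Req_dec x 0) as [->|Hx].
- rewrite sum_only0. rewrite Gs0. simpl pow. replace (1-0) with 1 by ring. rewrite pow1.
  unfold Binomial.C. replace (S m - 1)%nat with m by lia.
  change (Factorial.fact (S m)) with (S m * Factorial.fact m)%nat. rewrite mult_INR. simpl Factorial.fact.
  assert (INR (Factorial.fact m) <> 0) by (apply not_0_INR, Factorial.fact_neq_0). change (INR 1) with 1. field. auto.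
  intros k Hk. destruct k. lia. simpl. ring.
- apply (Rmult_eq_reg_l x); auto. rewrite Gs_geom.
  rewrite scal_sum.
  assert (Hb := binomial x (1-x) (S m)). replace (x + (1-x)) with 1 in Hb by ring.
  rewrite pow1 in Hb. rewrite decomp_sum in Hb by lia. simpl Init.Nat.pred in Hb.
  rewrite C_n_0 in Hb. 
  assert (E2: sum_f_R0 (fun i => Binomial.C (S m) (S i) * x ^ (S i) * (1 - x) ^ (S m - S i)) m =
              sum_f_R0 (fun i => Binomial.C (S m) (S i) * x ^ i * (1 - x) ^ (m - i) * x) m).
  { apply sum_eq. intros i _. simpl. ring. }
  rewrite <- E2. simpl in Hb. simpl. lra.
Qed.

Lemma closed m x q : sum_f_R0 (fun k => Binomial.C m k * x^k * (1-x)^(m-k) * (q / INR (k+1))) m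
   = q / INR (S m) * Gs m x.
Proof.
rewrite <- U_eq. rewrite scal_sum. unfold Rdiv. apply sum_eq. intros i Hi.
assert (H := binom_term m i Hi). unfold Rdiv in H.
transitivity (q * (Binomial.C m i * / INR (i+1)) * x^i * (1-x)^(m-i)). ring.
rewrite H. ring.
Qed.

Lemma Phi_eq m F c q : Phi (S m) F c q = q / INR (S m) * Gs m (F c * q).
Proof. unfold Phi. replace (S m - 1)%nat with m by lia. apply closed. Qed.

Lemma pow01 a k : 0 <= a <= 1 -> 0 <= a^k <= 1.
Proof. intros H; split. apply pow_le; lra. rewrite <- (pow1 k). apply pow_incr; lra. Qed.

Lemma Gs_bounds m a : 0 <= a <= 1 -> 1 <= Gs m a <= INR (S m).
Proof. intros H; unfold Gs; induction m.
- simpl; lra.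
- rewrite tech5. rewrite (S_INR (S m)). assert (HH := pow01 (1-a) (S m) ltac:(lra)). lra.
Qed.

Lemma Gs_nonneg m a : 0 <= 1 - a <= 1 -> 0 <= Gs m a.
Proof. intros H; unfold Gs; induction m.
- simpl; lra.
- rewrite tech5. assert (HH := pow01 (1-a) (S m) H). lra.
Qed.

Lemma Gs_mono m a b : 0 <= a <= b -> b <= 1 -> Gs m b <= Gs m a.
Proof. intros H1 H2; unfold Gs; induction m.
- simpl; lra.
- rewrite !tech5. assert ((1-b)^(S m) <= (1-a)^(S m)) by (apply pow_incr; lra). lra.
Qed.

Lemma F01 F f clo chi : cost_distribution F f clo chi -> forall x, 0 <= F x <= 1.
Proof.
intros (_ & _ & Hm & Hl0 & Hl1 & _) x. split.
- assert (H := is_lim_le_loc F (fun _ => F x) m_infty 0 (F x)).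
  simpl in H. apply H; auto. exists x. intros y Hy; apply Hm; lra. apply is_lim_const.
- assert (H := is_lim_le_loc (fun _ => F x) F p_infty (F x) 1).
  simpl in H. apply H; auto. exists x. intros y Hy; apply Hm; lra. apply is_lim_const.
Qed.

Lemma sumL_le L (g h : nat -> R) : (forall l, (l < L)%nat -> g l <= h l) -> sumL L g <= sumL L h.
Proof. induction L; simpl; intros H. lra. assert (H1 := H L (Nat.lt_succ_diag_r L)).
 assert (sumL L g <= sumL L h) by (apply IHL; intros; apply H; lia). lra. Qed.

Lemma sumL_scal L (v : nat -> R) k : sumL L (fun l => v l * k) = sumL L v * k.
Proof. induction L; simpl. ring. rewrite IHL; ring. Qed.

Lemma sumL_0 L (g : nat -> R) : (forall l, g l = 0) -> sumL L g = 0.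
Proof. intros H; induction L; simpl. ring. rewrite IHL, H; ring. Qed.

Lemma P_eq m F c : Phi (S m) F c 1 = / INR (S m) * Gs m (F c).
Proof. rewrite Phi_eq, Rmult_1_r. unfold Rdiv. ring. Qed.

Lemma INRpos m : 0 < INR (S m).
Proof. apply lt_0_INR; lia. Qed.

Lemma Phi_q m F c q : 0 <= F c <= 1 -> 0 <= q <= 1 -> 0 <= Phi (S m) F c q <= Phi (S m) F c 1.
Proof.
intros Ha Hq. rewrite P_eq, Phi_eq. unfold Rdiv.
assert (Hn := INRpos m). assert (Hi : 0 < / INR (S m)) by (apply Rinv_0_lt_compat; auto).
assert (0 <= F c * q <= 1) by nra.
assert (HG := Gs_nonneg m (F c * q)). assert (HG1 := Gs_bounds m (F c) Ha).
split.
- apply Rmult_le_pos. nra. apply HG; lra.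
- assert (q * Gs m (F c * q) <= Gs m (F c)).
  { destruct (Req_dec (F c) 0) as [E|E].
    + rewrite E, Rmult_0_l. rewrite E in HG1. nra.
    + apply (Rmult_le_reg_l (F c)). lra.
      replace (F c * (q * Gs m (F c * q))) with ((F c * q) * Gs m (F c * q)) by ring.
      rewrite !Gs_geom. assert ((1 - F c)^(S m) <= (1 - F c * q)^(S m)) by (apply pow_incr; nra).
      lra. }
  nra.
Qed.

Theorem lemma4 (n : nat) (F f : R -> R) (clo chi : Rbar)
  (L : nat) (mu qb : nat -> R) :
  (1 <= n)%nat ->
  cost_distribution F f clo chi ->
  (forall l, (l < L)%nat -> 0 < mu l <= 1) ->
  (forall l, (l < L)%nat -> 0 < qb l <= 1) ->
  exists ca : R -> R,
    (forall vbar, 0 < vbar ->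
       ca vbar = vbar * Phi n F (ca vbar) 1 /\
       (forall c, c = vbar * Phi n F c 1 -> c = ca vbar)) /\
    (forall v1 v2, 0 < v1 -> v1 < v2 -> ca v1 < ca v2) /\
    (forall vbar, 0 < vbar ->
       forall c, Cset n F L mu qb vbar c <-> 0 <= c <= ca vbar).
Proof.
intros Hn HF Hmu Hqb.
destruct n as [|m]; [lia|].
assert (HF01 := F01 F f clo chi HF).
destruct HF as (_ & _ & Hm & _ & _ & Hc & _).
set (P := fun c => Phi (S m) F c 1).
assert (HP : forall c, 0 < P c <= 1).
{ intros c. unfold P. rewrite P_eq. assert (Hn' := INRpos m).
  assert (HG := Gs_bounds m (F c) (HF01 c)).
  assert (Hi : 0 < / INR (S m)) by (apply Rinv_0_lt_compat; auto).
  split. nra. apply (Rmult_le_reg_l (INR (S m))); auto.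
  rewrite <- Rmult_assoc, Rinv_r by lra. lra. }
assert (Hmono : forall c1 c2, c1 <= c2 -> P c2 <= P c1).
{ intros c1 c2 H. unfold P. rewrite !P_eq. apply Rmult_le_compat_l.
  left; apply Rinv_0_lt_compat, INRpos. apply Gs_mono. split. apply HF01. apply Hm; auto.
  apply HF01. }
assert (Hcont : forall vbar, continuity (fun c => c - vbar * P c)).
{ intros vbar x. apply (continuity_pt_minus (fun c => c) (fun c => vbar * P c)).
  apply continuity_pt_id.
  apply (continuity_pt_scal P vbar).
  apply continuity_pt_filterlim.
  apply (continuous_ext (fun c => scal (/ INR (S m)) (Gs m (F c)))).
  { intros y. unfold P. rewrite P_eq. reflexivity. }
  apply (continuous_scal_r (/ INR (S m)) (fun c => Gs m (F c))).
  apply cont_Gs. apply Hc. }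
assert (Hfix : forall vbar, {c | 0 < vbar -> c = vbar * P c}).
{ intros vbar. destruct (Rlt_dec 0 vbar) as [Hv|Hv].
  - destruct (IVT (fun c => c - vbar * P c) (-1) (vbar + 1) (Hcont vbar)) as [z [_ Hz]].
    lra. assert (H := HP (-1)). nra. assert (H := HP (vbar+1)). nra.
    exists z. intros _. lra.
  - exists 0. intros; lra. }
assert (Hstr : forall vbar c1 c2, 0 < vbar -> c1 < c2 -> c1 - vbar * P c1 < c2 - vbar * P c2).
{ intros vbar c1 c2 Hv H. assert (H2 := Hmono c1 c2 (Rlt_le _ _ H)). nra. }
exists (fun v => proj1_sig (Hfix v)).
assert (Hca : forall v, 0 < v -> proj1_sig (Hfix v) = v * P (proj1_sig (Hfix v))).
{ intros v Hv. destruct (Hfix v) as [z Hz]. simpl. auto. }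
assert (Hle : forall v c, 0 < v -> c <= v * P c -> c <= proj1_sig (Hfix v)).
{ intros v c Hv H. destruct (Rle_dec c (proj1_sig (Hfix v))) as [h|h]; auto.
  assert (H1 := Hstr v (proj1_sig (Hfix v)) c Hv ltac:(lra)). rewrite <- Hca in H1 by auto. lra. }
assert (Hge : forall v c, 0 < v -> c <= proj1_sig (Hfix v) -> c <= v * P c).
{ intros v c Hv H. destruct (Rle_lt_or_eq_dec _ _ H) as [h|h].
  - assert (H1 := Hstr v c (proj1_sig (Hfix v)) Hv h). rewrite <- Hca in H1 by auto. lra.
  - rewrite h. rewrite <- Hca by auto. lra. }
split; [|split].
- intros vbar Hv. split. apply Hca; auto.
  intros c Hc'. apply Rle_antisym. apply Hle; auto. fold (P c) in Hc'. lra.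
  fold (P c) in Hc'. 
  destruct (Rle_dec (proj1_sig (Hfix vbar)) c) as [h|h]; auto.
  assert (H1 := Hstr vbar c (proj1_sig (Hfix vbar)) Hv ltac:(lra)). rewrite <- Hca in H1 by auto. lra.
- intros v1 v2 H1 H2. destruct (Rlt_le_dec (proj1_sig (Hfix v1)) (proj1_sig (Hfix v2))) as [h|h]; auto.
  exfalso. assert (E1 := Hca v1 H1). assert (E2 := Hca v2 ltac:(lra)).
  assert (M := Hmono _ _ h). assert (P1 := HP (proj1_sig (Hfix v2))). nra.
- intros vbar Hv c. split.
  + intros (v & va & qa & Hc' & Hb & Hv' & Hva & Hqa).
    unfold Psi in Hc'.
    assert (Hphi := Phi_q m F c qa (HF01 c) Hqa). fold (P c) in Hphi.
    assert (HPc := HP c).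
    assert (S1 : 0 <= sumL L (fun l => v l * mu l * Phi (S m) F c (qb l)) <= sumL L v * P c).
    { split.
      - replace 0 with (sumL L (fun _ => 0)) by (apply sumL_0; auto). apply sumL_le.
        intros l Hl. assert (Hq := Phi_q m F c (qb l) (HF01 c) ltac:(specialize (Hqb l Hl); lra)).
        specialize (Hmu l Hl). specialize (Hv' l Hl). apply Rmult_le_pos; [nra|lra].
      - rewrite <- sumL_scal. apply sumL_le.
        intros l Hl. assert (Hq := Phi_q m F c (qb l) (HF01 c) ltac:(specialize (Hqb l Hl); lra)).
        fold (P c) in Hq.
        specialize (Hmu l Hl). specialize (Hv' l Hl).
        assert (v l * mu l <= v l) by nra. nra. }
    split. nra. apply Hle; auto. nra.
  + intros [H0 H1]. exists (fun _ => 0), (c / P c), 1.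
    assert (HPc := HP c). assert (Hg := Hge vbar c Hv H1).
    split; [|split; [|split; [|split]]].
    * unfold Psi. rewrite sumL_0 by (intros; ring). fold (P c). field. lra.
    * rewrite sumL_0 by auto. rewrite Rplus_0_l. apply Rle_div_l; lra.
    * intros; lra.
    * apply Rdiv_le_0_compat; lra.
    * lra.
Qed.
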